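(* Let $H$ be an undirected graph and let $I$ be an induced minor of $H$. Then $\mathrm{dtd}(I)\le\mathrm{dtd}(H)$.
   Context: A graph $I$ is an induced minor of $H$ if it can be obtained from $H$ by deleting vertices and contracting edges. For a DAG $\vec H$, a source is a vertex of in-degree $0$. A DAG elimination forest of a DAG $\vec H$ is defined recursively: if $\vec H$ is empty, it is the empty forest; if the underlying undirected graph of $\vec H$ is disconnected, it is the union of DAG elimination forests (trees) of its connected components; if the underlying graph is connected and $\vec H$ has exactly one source $s$, it is the single-node tree $s$; otherwise (connected, at least two sources) it is a tree whose root is an arbitrarily chosen source $s$ of $\vec H$ and whose subtrees are the trees of a DAG elimination forest of the DAG obtained from $\vec H$ by deleting $s$ and all vertices reachable from $s$. The depth of a rooted forest is the maximum number of nodes on a root-to-leaf path. $\mathrm{dtd}(\vec H)$ is the minimum depth of a DAG elimination forest of $\vec H$; for an undirected graph $H$, $\mathrm{dtd}(H)$ is the maximum of $\mathrm{dtd}(\vec H)$ over all acyclic orientations $\vec H$ of $H$. *)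

(* Defs.v *)
From mathcomp Require Import all_boot.
From Stdlib Require Import ClassicalEpsilon.

Set Implicit Arguments.
Unset Strict Implicit.
Unset Printing Implicit Defensive.

Definition pbool (P : Prop) : bool :=
  if excluded_middle_informative P then true else false.

Section DAG.
Variable T : finType.

(* A digraph on T is given by its arc set D : {set T * T}; we always look at
   the sub-digraph induced on a vertex set S. *)
Definition arcs_in (D : {set T * T}) (S : {set T}) : rel T :=
  fun x y => [&& x \in S, y \in S & (x, y) \in D].

Definition und_in (D : {set T * T}) (S : {set T}) : rel T :=
  fun x y => [&& x \in S, y \in S & ((x, y) \in D) || ((y, x) \in D)].

Definition connectedb (D : {set T * T}) (S : {set T}) : bool :=
  (S != set0) && [forall x in S, forall y in S, connect (und_in D S) x y].

Definition components (D : {set T * T}) (S : {set T}) : {set {set T}} :=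
  [set [set y in S | connect (und_in D S) x y] | x in S].

Definition sources (D : {set T * T}) (S : {set T}) : {set T} :=
  [set s in S | [forall x in S, (x, s) \notin D]].

Definition reach (D : {set T * T}) (S : {set T}) (s : T) : {set T} :=
  [set y in S | connect (arcs_in D S) s y].

Inductive elim_depth (D : {set T * T}) : {set T} -> nat -> Prop :=
| ED_empty : elim_depth D set0 0
| ED_disconnected (S : {set T}) (kf : {set T} -> nat) :
    S != set0 -> ~~ connectedb D S ->
    (forall C, C \in components D S -> elim_depth D C (kf C)) ->
    elim_depth D S (\max_(C in components D S) kf C)
| ED_one_source (S : {set T}) :
    connectedb D S -> #|sources D S| = 1 -> elim_depth D S 1
| ED_root (S : {set T}) (s : T) (k : nat) :
    connectedb D S -> 1 < #|sources D S| -> s \in sources D S ->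
    elim_depth D (S :\: reach D S s) k -> elim_depth D S k.+1.

(* dtd of a DAG D on the vertex set T: the minimum depth of a DAG
   elimination forest.  (Every such depth is at most #|T|, so the minimum
   over k <= #|T| is the true minimum.) *)
Definition dtd_dag (D : {set T * T}) : nat :=
  \big[minn/#|T|]_(k < #|T|.+1 | pbool (elim_depth D [set: T] k)) k.

Definition acyclic_orientation (e : rel T) (D : {set T * T}) : bool :=
  [forall x, forall y, e x y == ((x, y) \in D) || ((y, x) \in D)] &&
  [forall x, forall y, ((x, y) \in D) ==> ~~ connect (arcs_in D [set: T]) y x].

Definition dtd (e : rel T) : nat :=
  \max_(D : {set T * T} | acyclic_orientation e D) dtd_dag D.

(* Contraction of the edge uv: v is merged into u. *)
Definition contract (e : rel T) (u v : T) : rel T :=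
  fun x y => (x != y) && [|| e x y, (x == u) && e v y | (y == u) && e x v].

(* im_reach V0 e0 V e : the graph (V, e) (vertex set V, edges e restricted
   to V) is obtained from (V0, e0) by a sequence of vertex deletions and
   edge contractions. *)
Inductive im_reach (V0 : {set T}) (e0 : rel T) : {set T} -> rel T -> Prop :=
| IM_refl : im_reach V0 e0 V0 e0
| IM_delete V e v : im_reach V0 e0 V e -> v \in V -> im_reach V0 e0 (V :\ v) e
| IM_contract V e u v : im_reach V0 e0 V e -> u \in V -> v \in V -> u != v ->
    e u v -> im_reach V0 e0 (V :\ v) (contract e u v).

End DAG.

Definition induced_minor (T' T : finType) (eI : rel T') (eH : rel T) : Prop :=
  exists (V : {set T}) (e : rel T),
    im_reach [set: T] eH V e /\
    exists f : T' -> T,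
      [/\ injective f, [set f x | x in T'] = V &
          forall x y, eI x y = e (f x) (f y)].

(* Main.v *)
From Stdlib Require Import ClassicalEpsilon.
Require Import Defs.
From mathcomp Require Import all_boot.

Set Implicit Arguments.
Unset Strict Implicit.
Unset Printing Implicit Defensive.

Lemma pboolP (P : Prop) : pbool P <-> P.
Proof.
rewrite /pbool; case: excluded_middle_informative => [p|np]; split => //.
Qed.

Section Gen.
Variable T : finType.
Implicit Types (e : rel T).

Lemma connect_fwd e (e' : rel T) (W : pred T) x y :
  (forall a b, W a -> e a b -> W b /\ e' a b) ->
  W x -> connect e x y -> W y /\ connect e' x y.
Proof.
move=> H Wx /connectP [p pth ->] {y}.
elim: p x Wx pth => [|z p IH] x Wx /=; first by split => //; exact: connect0.
case/andP => exz pz; have [Wz e'xz] := H _ _ Wx exz.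
have [Wl cz] := IH z Wz pz; split => //.
exact: connect_trans (connect1 e'xz) cz.
Qed.

Lemma connect_bwd e (e' : rel T) (W : pred T) x y :
  (forall a b, W b -> e a b -> W a /\ e' a b) ->
  W y -> connect e x y -> W x /\ connect e' x y.
Proof.
move=> H Wy /connectP [p pth yE]; subst y.
elim: p x Wy pth => [|z p IH] x /= Wy; first by split => //; exact: connect0.
case/andP => exz pz; have [Wz cz] := IH z Wy pz.
have [Wx e'xz] := H _ _ Wz exz; split => //.
exact: connect_trans (connect1 e'xz) cz.
Qed.

Lemma connect_first e x y : connect e x y -> x != y -> exists2 z, e x z & connect e z y.
Proof.
move/connectP=> [[|z p] /= pth ->]; first by rewrite eqxx.
case/andP: pth => exz pz _; exists z => //; apply/connectP; by exists p.
Qed.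

Lemma connect_last e x y : connect e x y -> x != y -> exists z, e z y.
Proof.
move/connectP=> [p]; elim: p x => [|z p IH] x /=; first by move=> _ ->; rewrite eqxx.
case/andP=> exz pz yE xy; case: (eqVneq z y) => [zy|zy].
  by exists x; rewrite -zy.
exact: IH pz yE zy.
Qed.

End Gen.

Lemma connect_map (T1 T2 : finType) (e : rel T1) (e2 : rel T2) (h : T1 -> T2) :
  (forall a b, e a b -> connect e2 (h a) (h b)) ->
  forall x y, connect e x y -> connect e2 (h x) (h y).
Proof.
move=> H x y /connectP [p pth ->] {y}.
elim: p x pth => [|z p IH] x /=; first by move=> _; exact: connect0.
case/andP => exz pz; exact: connect_trans (H _ _ exz) (IH _ pz).
Qed.

Lemma connect_lift (T1 T2 : finType) (e : rel T1) (e2 : rel T2) (f : T2 -> T1) :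
  (forall a y, e (f a) y -> exists2 b, y = f b & e2 a b) ->
  forall a y, connect e (f a) y -> exists2 b, y = f b & connect e2 a b.
Proof.
move=> H a y /connectP [p pth ->] {y}.
elim: p a pth => [|z p IH] a /=; first by move=> _; exists a => //; exact: connect0.
case/andP=> ez pz; have [b zE e2ab] := H _ _ ez; subst z.
have [c lE cc] := IH b pz; exists c => //; exact: connect_trans (connect1 e2ab) cc.
Qed.

Lemma connect_mono (T1 : finType) (e e2 : rel T1) :
  subrel e e2 -> forall x y, connect e x y -> connect e2 x y.
Proof. move=> H; apply: (connect_map (h := id)) => a b /H; exact: connect1. Qed.

Section Dag.
Variable T : finType.
Implicit Types (D : {set T * T}) (S X W Y C : {set T}).

Definition acyclic D := forall x y, (x, y) \in D -> ~~ connect (arcs_in D setT) y x.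
Definition F D S k := exists2 k', k' <= k & elim_depth D S k'.
Definition comp D S x := [set y in S | connect (und_in D S) x y].
Definition closed_in D X W := forall a b, a \in W -> b \in X -> und_in D X a b -> b \in W.

Lemma F_mono D S k k' : F D S k -> k <= k' -> F D S k'.
Proof. by case=> j le H le'; exists j => //; exact: leq_trans le le'. Qed.

Lemma F_of D S k : elim_depth D S k -> F D S k.
Proof. by exists k. Qed.

Lemma arcs_und D S x y : arcs_in D S x y -> und_in D S x y.
Proof. by rewrite /arcs_in /und_in => /and3P [-> -> ->]. Qed.

Lemma und_sym D S : symmetric (und_in D S).
Proof. by move=> x y; rewrite /und_in andbCA orbC. Qed.

Lemma connect_und_sym D S x y :
  connect (und_in D S) x y = connect (und_in D S) y x.
Proof. exact: (sym_connect_sym (@und_sym D S)). Qed.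

Lemma arcs_mono D S S' : S \subset S' -> subrel (arcs_in D S) (arcs_in D S').
Proof.
move=> /subsetP sS x y; rewrite /arcs_in => /and3P [xS yS ->].
by rewrite !sS.
Qed.

Lemma und_mono D S S' : S \subset S' -> subrel (und_in D S) (und_in D S').
Proof.
move=> /subsetP sS x y; rewrite /und_in => /and3P [xS yS ->].
by rewrite !sS.
Qed.

Lemma acyc_in D S x y : acyclic D -> (x, y) \in D -> ~~ connect (arcs_in D S) y x.
Proof.
move=> acD xy; apply/negP => /(connect_mono (arcs_mono (D:=D) (subsetT S))).
by apply/negP; exact: acD.
Qed.

Lemma arcs_connect_und D S x y :
  connect (arcs_in D S) x y -> connect (und_in D S) x y.
Proof. apply: connect_mono => a b; exact: arcs_und. Qed.

Lemma mem_comps D S C :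
  reflect (exists2 x, x \in S & C = comp D S x) (C \in components D S).
Proof. by apply: (iffP imsetP) => [[x xS ->]|[x xS ->]]; exists x. Qed.

Lemma comp_self D S x : x \in S -> x \in comp D S x.
Proof. by move=> xS; rewrite inE xS connect0. Qed.

Lemma comp_sub D S x : comp D S x \subset S.
Proof. by apply/subsetP => y; rewrite inE => /andP []. Qed.

Lemma comp_closed D S x : closed_in D S (comp D S x).
Proof.
move=> a b; rewrite !inE => /andP [aS cxa] bS ab; rewrite bS /=.
exact: connect_trans cxa (connect1 ab).
Qed.

Lemma comp_restrict D X W x : W \subset X -> closed_in D X W -> x \in W ->
  comp D X x = comp D W x.
Proof.
move=> WX clW xW; apply/setP => y; rewrite !inE; apply/idP/idP.
  case/andP => yX cxy.
  have H : forall a b, a \in W -> und_in D X a b -> b \in W /\ und_in D W a b.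
    move=> a b aW ab; move: (ab); rewrite /und_in => /and3P [_ bX ->].
    have bW := clW _ _ aW bX ab; by rewrite aW bW.
  have [yW cW] := connect_fwd (W := mem W) H xW cxy.
  by rewrite inE in yW; rewrite yW.
case/andP => yW cxy; rewrite (subsetP WX _ yW) /=.
exact: connect_mono (und_mono (D:=D) WX) _ _ cxy.
Qed.

Lemma comps_sub D X W : W \subset X -> closed_in D X W ->
  components D W \subset components D X.
Proof.
move=> WX clW; apply/subsetP => C /mem_comps [x xW ->].
apply/mem_comps; exists x; first exact: (subsetP WX).
by rewrite (comp_restrict WX clW xW).
Qed.

Lemma connectedP D S : connectedb D S ->
  forall x y, x \in S -> y \in S -> connect (und_in D S) x y.
Proof.
case/andP => _ /forall_inP H x y xS yS.
by have /forall_inP := H x xS; apply.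
Qed.

Lemma comp_conn D S x : connectedb D S -> x \in S -> comp D S x = S.
Proof.
move=> cS xS; apply/setP => y; rewrite inE.
by case yS: (y \in S) => //=; apply: connectedP.
Qed.

Lemma comp_full D S x : x \in S -> comp D S x = S -> connectedb D S.
Proof.
move=> xS cE; apply/andP; split; first by apply/set0Pn; exists x.
apply/forall_inP => a aS; apply/forall_inP => b bS.
have : a \in comp D S x by rewrite cE.
have : b \in comp D S x by rewrite cE.
rewrite !inE => /andP [_ cb] /andP [_ ca].
rewrite connect_und_sym in ca.
exact: connect_trans ca cb.
Qed.

Lemma glue D S k : (forall C, C \in components D S -> F D C k) -> F D S k.
Proof.
move=> H.
have [->|S0] := eqVneq S set0; first by exists 0 => //; exact: ED_empty.
case cS: (connectedb D S).
  have /set0Pn [x xS] := S0.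
  have E := comp_conn cS xS; apply: H; apply/mem_comps; exists x => //; by rewrite E.
pose kf C := epsilon (inhabits 0) (fun k' => k' <= k /\ elim_depth D C k').
have kfP C : C \in components D S -> kf C <= k /\ elim_depth D C (kf C).
  move=> CS; apply: (epsilon_spec (inhabits 0) (fun k' => k' <= k /\ elim_depth D C k')); have [k' ? ?] := H C CS; by exists k'.
exists (\max_(C in components D S) kf C).
  by apply/bigmax_leqP => C /kfP [].
apply: ED_disconnected => //; first by rewrite cS.
by move=> C /kfP [].
Qed.

Lemma split D S k : elim_depth D S k -> forall C, C \in components D S -> F D C k.
Proof.
move=> H; move: (H); case: H => [|S' kf S0 nc HC|S' cS _|S' s k' cS _ _ _] H C.
- by case/mem_comps => x; rewrite inE.
- move=> CS; exists (kf C); [exact: leq_bigmax_cond | exact: HC].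
- by case/mem_comps => x xS ->; rewrite (comp_conn cS xS); exists 1.
- by case/mem_comps => x xS ->; rewrite (comp_conn cS xS); exists (k'.+1).
Qed.

Lemma F_closed D X W k : F D X k -> W \subset X -> closed_in D X W -> F D W k.
Proof.
case=> k' le H WX clW; apply: glue => C CW.
apply: F_mono le; apply: split H _ _.
exact: (subsetP (comps_sub WX clW)).
Qed.

Lemma closedI D X W Y : closed_in D X W -> Y \subset X -> closed_in D Y (W :&: Y).
Proof.
move=> clW YX a b; rewrite !inE => /andP [aW aY] bY ab; rewrite bY andbT.
exact: clW aW (subsetP YX _ bY) (und_mono YX ab).
Qed.

Lemma reach_closed D S W s : W \subset S -> closed_in D S W -> s \in W ->
  reach D W s = reach D S s.
Proof.
move=> WS clW sW; apply/setP => y; rewrite !inE; apply/idP/idP.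
  case/andP => yW c; rewrite (subsetP WS _ yW) /=.
  exact: connect_mono (arcs_mono (D:=D) WS) _ _ c.
case/andP => yS c.
have H : forall a b, a \in W -> arcs_in D S a b -> b \in W /\ arcs_in D W a b.
  move=> a b aW ab; move: (ab); rewrite /arcs_in => /and3P [_ bS ->].
  have bW := clW _ _ aW bS (arcs_und ab); by rewrite aW bW.
have [yW cW] := connect_fwd (W := mem W) H sW c.
by rewrite inE in yW; rewrite yW.
Qed.

Lemma sources_sub D S W s : W \subset S -> s \in W -> s \in sources D S ->
  s \in sources D W.
Proof.
move=> WS sW; rewrite !inE => /andP [_ /forall_inP H]; rewrite sW /=.
by apply/forall_inP => z zW; apply: H; exact: (subsetP WS).
Qed.

Lemma lemB D S s k : s \in sources D S -> F D (S :\: reach D S s) k -> F D S k.+1.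
Proof.
have [n] := ubnP #|S|; elim: n S s k => // n IH S s k /ltnSE leSn sS HF.
have sSS : s \in S by move: sS; rewrite inE => /andP [].
case cS: (connectedb D S).
  have g0 : 0 < #|sources D S| by apply/card_gt0P; exists s.
  case: (leqP #|sources D S| 1) => h.
    exists 1 => //; apply: ED_one_source => //; apply/eqP; by rewrite eqn_leq h g0.
  case: HF => k' le Hk; exists (k'.+1); [by rewrite ltnS | exact: (ED_root cS h sS Hk)].
apply: glue => C /mem_comps [x xS ->].
have CS := @comp_sub D S x; have clC := @comp_closed D S x.
have RS : S :\: reach D S s \subset S by apply: subsetDl.
case sC: (s \in comp D S x).
  have CR : comp D S x :\: reach D S s = comp D S x :&: (S :\: reach D S s).
    apply/setP => y; rewrite !inE.
    by case: (y \in S); case: (connect _ x y); case: (connect _ s y).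
  apply: (IH _ s); last 1 first.
  - rewrite (reach_closed CS clC sC) CR; apply: F_closed HF _ _.
      exact: subsetIr.
    exact: closedI clC RS.
  - apply: leq_trans leSn; apply: proper_card; rewrite properEneq CS andbT.
    apply/eqP => E; by rewrite (comp_full xS E) in cS.
  - exact: sources_sub CS sC sS.
have CR : comp D S x :&: (S :\: reach D S s) = comp D S x.
  apply/setP => y; rewrite !inE; case yS: (y \in S) => //=.
  case cxy: (connect (und_in D S) x y) => //=; rewrite andbT.
  apply/negP => c.
  have cxs : connect (und_in D S) x s.
    apply: connect_trans cxy _; rewrite connect_und_sym; exact: arcs_connect_und c.
  by rewrite inE sSS cxs in sC.
apply: F_mono (leqnSn k); rewrite -CR; apply: F_closed HF _ _.
  exact: subsetIr.
exact: closedI clC RS.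
Qed.

Lemma anc_source D S y : acyclic D -> y \in S ->
  exists2 s, s \in sources D S & connect (arcs_in D S) s y.
Proof.
move=> acD yS.
pose anc x := [set z in S | connect (arcs_in D S) z x].
suff H : forall n x, #|anc x| <= n -> x \in S -> connect (arcs_in D S) x y ->
    exists2 s, s \in sources D S & connect (arcs_in D S) s y.
  exact: (H _ y (leqnn _) yS (connect0 _ _)).
elim=> [|n IH] x.
  move=> h xS _; have xa : x \in anc x by rewrite inE xS connect0.
  by move: h; rewrite leqn0 cards_eq0 => /eqP E; rewrite E inE in xa.
move=> h xS cxy.
case xsrc: (x \in sources D S); first by exists x.
move: xsrc; rewrite inE xS /= => /forall_inPn [z zS /negPn zx].
have zx' : arcs_in D S z x by rewrite /arcs_in zS xS zx.
apply: (IH z) => //; last exact: connect_trans (connect1 zx') cxy.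
have sub : anc z \subset anc x.
  apply/subsetP => w; rewrite !inE => /andP [-> c] /=.
  exact: connect_trans c (connect1 zx').
have xin : x \in anc x by rewrite inE xS connect0.
have xout : x \notin anc z.
  rewrite inE xS /=; exact: (@acyc_in D S z x acD zx).
have : #|anc z| < #|anc x|.
  apply: proper_card; rewrite properE sub /=; apply/subsetPn; by exists x.
move=> lt; rewrite -ltnS; exact: leq_trans lt h.
Qed.

Lemma uniq_src D S s y : acyclic D -> #|sources D S| = 1 -> s \in sources D S ->
  y \in S -> connect (arcs_in D S) s y.
Proof.
move=> acD /eqP/cards1P [s0 E] sS yS.
have [t tS c] := anc_source acD yS.
by move: sS tS; rewrite E !inE => /eqP -> /eqP <-.
Qed.

Lemma L_one D X s : acyclic D -> s \in X ->
  (forall y, y \in X -> connect (arcs_in D X) s y) -> elim_depth D X 1.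
Proof.
move=> acD sX H.
have srcE : sources D X = [set s].
  apply/setP => t; rewrite !inE; apply/idP/idP.
    case/andP => tX /forall_inP src; apply/negPn/negP => ts.
    have st : s != t by rewrite eq_sym.
    have [z] := connect_last (H t tX) st.
    rewrite /arcs_in => /and3P [zX _ zt]; by move: (src z zX); rewrite zt.
  move/eqP => ->; rewrite sX /=; apply/forall_inP => z zX; apply/negP => zs.
  by move: (@acyc_in D X z s acD zs); rewrite H.
apply: ED_one_source; last by rewrite srcE cards1.
apply/andP; split; first by apply/set0Pn; exists s.
apply/forall_inP => a aX; apply/forall_inP => b bX.
have ca := arcs_connect_und (H a aX); have cb := arcs_connect_und (H b bX).
rewrite connect_und_sym in ca; exact: connect_trans ca cb.
Qed.

Lemma lemA D (acD : acyclic D) U k : elim_depth D U k ->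
  forall X, X \subset U ->
  (forall a b, a \in U -> a \notin X -> b \in U -> (a, b) \in D -> b \notin X) ->
  F D X k.
Proof.
elim=> {U k} [|U kf U0 nc HC IH|U cU s1|U s k' cU s2 sS HR IH] X XU oc.
- by move: XU; rewrite subset0 => /eqP ->; exists 0 => //; exact: ED_empty.
- apply: glue => C' /mem_comps [x xX ->].
  have xU := subsetP XU _ xX.
  have CU : comp D U x \in components D U by apply/mem_comps; exists x.
  have CcU := @comp_sub D U x; have clC := @comp_closed D U x.
  have [k1 le1 H1] : F D (X :&: comp D U x) (kf (comp D U x)).
    apply: IH => //; first exact: subsetIr.
    move=> a b aC; rewrite inE aC andbT => aX bC ab; rewrite inE bC andbT.
    exact: oc (subsetP CcU _ aC) aX (subsetP CcU _ bC) ab.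
  have clXC : closed_in D X (X :&: comp D U x).
    move=> a b /setIP [aX aC] bX ab; apply/setIP; split => //.
    exact: (clC a b aC (subsetP XU _ bX) (und_mono XU ab)).
  have xXC : x \in X :&: comp D U x by rewrite inE xX comp_self.
  rewrite (comp_restrict (subsetIl _ _) clXC xXC).
  apply: F_mono (leq_trans le1 (leq_bigmax_cond _ CU)).
  apply: split H1 _ _; apply/mem_comps; by exists x.
- have [->|X0] := eqVneq X set0; first by exists 0 => //; exact: ED_empty.
  have /set0Pn [y yX] := X0.
  have s1' := s1.
  have /eqP/cards1P [s sE] := s1.
  have sS : s \in sources D U by rewrite sE set11.
  have sU : s \in U by move: sS; rewrite inE => /andP [].
  have sX : s \in X.
    apply/negPn/negP => sX.
    have H : forall a b, (a \in U) && (a \notin X) -> arcs_in D U a b ->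
        (b \in U) && (b \notin X) /\ arcs_in D U a b.
      move=> a b /andP [aU aX] ab; split => //; move: (ab).
      rewrite /arcs_in => /and3P [_ bU abD]; by rewrite bU (oc a b).
    have [/andP [_ yX'] _] := connect_fwd (W := fun z => (z \in U) && (z \notin X)) H
        (introT andP (conj sU sX)) (uniq_src acD s1' sS (subsetP XU _ yX)).
    by rewrite yX in yX'.
  exists 1 => //; apply: (L_one acD sX) => z zX.
  have H : forall a b, b \in X -> arcs_in D U a b -> a \in X /\ arcs_in D X a b.
    move=> a b bX; rewrite /arcs_in => /and3P [aU bU abD].
    have aX : a \in X by apply/negPn/negP => aX; move: (oc a b aU aX bU abD); rewrite bX.
    by rewrite aX bX abD.
  have [_ ->] := connect_bwd (W := mem X) H zX (uniq_src acD s1' sS (subsetP XU _ zX)).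
  done.
- have sU : s \in U by move: sS; rewrite inE => /andP [].
  case sX: (s \in X).
    apply: (lemB (s:=s)); first exact: sources_sub XU sX sS.
    apply: IH.
      apply/subsetP => y; rewrite !inE => /andP [ny yX]; rewrite (subsetP XU _ yX) andbT.
      apply/negP => c; move/negP: ny; apply.
      have H : forall a b, b \in X -> arcs_in D U a b -> a \in X /\ arcs_in D X a b.
        move=> a b bX; rewrite /arcs_in => /and3P [aU bU abD].
        have aX : a \in X by apply/negPn/negP => aX; move: (oc a b aU aX bU abD); rewrite bX.
        by rewrite aX bX abD.
      have [_ c'] := connect_bwd (W := mem X) H yX c.
      by rewrite yX c'.
    move=> a b; rewrite !inE => /andP [_ aU] ana /andP [_ bU] abD.
    case aX: (a \in X); last by rewrite (negbTE (oc a b aU (negbT aX) bU abD)) andbF.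
    move: ana; rewrite aX andbT => /negPn ca.
    case bX: (b \in X); rewrite ?andbF //= andbT; apply/negPn.
    apply: connect_trans ca (connect1 _); by rewrite /arcs_in aX bX abD.
  have RX : reach D U s \subset U :\: X.
    have H : forall a b, (a \in U) && (a \notin X) -> arcs_in D U a b ->
        (b \in U) && (b \notin X) /\ arcs_in D U a b.
      move=> a b /andP [aU aX] ab; split => //; move: (ab).
      rewrite /arcs_in => /and3P [_ bU abD]; by rewrite bU (oc a b).
    apply/subsetP => y; rewrite !inE => /andP [yU c].
    have [/andP [_ ->] _] := connect_fwd (W := fun z => (z \in U) && (z \notin X)) H
        (introT andP (conj sU (negbT sX))) c.
    by rewrite yU.
  apply: F_mono (leqnSn k'); apply: IH.
    apply/subsetP => y yX; rewrite inE (subsetP XU _ yX) andbT.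
    apply/negP => yR; have := subsetP RX _ yR; by rewrite inE yX.
  move=> a b; rewrite !inE => /andP [_ aU] aX /andP [_ bU] abD.
  exact: oc aU aX bU abD.
Qed.

Section Agree.
Variables (D D' : {set T * T}) (S : {set T}).
Hypothesis HA : forall x y, x \in S -> y \in S -> ((x, y) \in D) = ((x, y) \in D').

Lemma arcs_agree : arcs_in D S =2 arcs_in D' S.
Proof.
move=> x y; rewrite /arcs_in; case xS: (x \in S); case yS: (y \in S) => //=.
exact: HA.
Qed.

Lemma und_agree : und_in D S =2 und_in D' S.
Proof.
move=> x y; rewrite /und_in; case xS: (x \in S); case yS: (y \in S) => //=.
by rewrite !HA.
Qed.

Lemma comps_agree : components D S = components D' S.
Proof.
apply/setP => C; apply/mem_comps/mem_comps => [[x xS ->]|[x xS ->]]; exists x => //;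
  apply/setP => y; by rewrite !inE (eq_connect und_agree).
Qed.

Lemma conn_agree : connectedb D S = connectedb D' S.
Proof.
rewrite /connectedb; congr (_ && _).
apply/forall_inP/forall_inP => h x xS; apply/forall_inP => y yS;
  have /forall_inP := h x xS; move=> /(_ y yS); by rewrite (eq_connect und_agree).
Qed.

Lemma sources_agree : sources D S = sources D' S.
Proof.
apply/setP => s; rewrite !inE; case sS: (s \in S) => //=.
apply/forall_inP/forall_inP => h z zS.
  by rewrite -HA // h.
by rewrite HA // h.
Qed.

Lemma reach_agree s : reach D S s = reach D' S s.
Proof. by apply/setP => y; rewrite !inE (eq_connect arcs_agree). Qed.

End Agree.

Lemma agree D D' S k : elim_depth D S k ->
  (forall x y, x \in S -> y \in S -> ((x, y) \in D) = ((x, y) \in D')) ->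
  elim_depth D' S k.
Proof.
elim=> {S k} [|S kf S0 nc HC IH|S cS s1|S s k cS s2 sS HR IH] H.
- exact: ED_empty.
- rewrite (comps_agree H); apply: ED_disconnected => //.
    by rewrite -(conn_agree H).
  move=> C; rewrite -(comps_agree H) => CS; apply: IH => // x y xC yC.
  have CsS : C \subset S by case/mem_comps: CS => z _ ->; exact: comp_sub.
  exact: H (subsetP CsS _ xC) (subsetP CsS _ yC).
- by apply: ED_one_source; rewrite -?(conn_agree H) -?(sources_agree H).
- apply: (ED_root (s := s)); rewrite -?(conn_agree H) -?(sources_agree H) //.
  rewrite -(reach_agree H); apply: IH => x y; rewrite !inE => /andP [_ xS] /andP [_ yS].
  exact: H.
Qed.

Lemma F_agree D D' S k : F D S k ->
  (forall x y, x \in S -> y \in S -> ((x, y) \in D) = ((x, y) \in D')) -> F D' S k.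
Proof. by case=> k' le H HA; exists k' => //; exact: agree H HA. Qed.

End Dag.

Section Transfer.
Variables (T T' : finType) (f : T' -> T).
Hypothesis finj : injective f.
Variable D : {set T * T}.
Definition DI : {set T' * T'} := [set p | (f p.1, f p.2) \in D].

Lemma conn_corr (e : rel T) (e' : rel T') :
  (forall a b, e' a b = e (f a) (f b)) ->
  (forall a y, e (f a) y -> exists b, y = f b) ->
  forall a b, connect e' a b = connect e (f a) (f b).
Proof.
move=> E L a b; apply/idP/idP.
  apply: connect_map => x y; rewrite E; exact: connect1.
move=> c.
have LL : forall x y, e (f x) y -> exists2 b, y = f b & e' x b.
  move=> x y exy; have [z yE] := L _ _ exy; exists z => //; by rewrite E -yE.
have [b' fE c'] := connect_lift LL c.
by rewrite (finj fE).
Qed.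

Section S.
Variable S : {set T}.
Hypothesis im : forall y, y \in S -> exists a, y = f a.
Let X := f @^-1: S.

Lemma arcsI a b : arcs_in DI X a b = arcs_in D S (f a) (f b).
Proof. by rewrite /arcs_in !inE. Qed.

Lemma undI a b : und_in DI X a b = und_in D S (f a) (f b).
Proof. by rewrite /und_in !inE. Qed.

Lemma conn_arcsI a b : connect (arcs_in DI X) a b = connect (arcs_in D S) (f a) (f b).
Proof.
apply: conn_corr; first exact: arcsI.
move=> a' y; rewrite /arcs_in => /and3P [_ yS _]; exact: im.
Qed.

Lemma conn_undI a b : connect (und_in DI X) a b = connect (und_in D S) (f a) (f b).
Proof.
apply: conn_corr; first exact: undI.
move=> a' y; rewrite /und_in => /and3P [_ yS _]; exact: im.
Qed.

Lemma sourcesI a : (a \in sources DI X) = (f a \in sources D S).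
Proof.
rewrite !inE; case aS: (f a \in S) => //=.
apply/forall_inP/forall_inP => h y yS.
  have [b yE] := im yS; subst y; have := h b; rewrite /X !inE => H; exact: H.
move: yS; rewrite /X inE => yS; have := h _ yS; by rewrite inE.
Qed.

Lemma reachI a b : (b \in reach DI X a) = (f b \in reach D S (f a)).
Proof. by rewrite !inE conn_arcsI. Qed.

End S.

Lemma transfer S k : elim_depth D S k -> (forall y, y \in S -> exists a, y = f a) ->
  F DI (f @^-1: S) k.
Proof.
elim=> {S k} [|S kf S0 nc HC IH|S cS s1|S s k cS s2 sS HR IH] im.
- exists 0 => //; have -> : f @^-1: set0 = set0 :> {set T'} by apply/setP => x; rewrite !inE.
  exact: ED_empty.
- apply: glue => C' /mem_comps [a aX ->].
  have faS : f a \in S by rewrite inE in aX.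
  have CS : comp D S (f a) \in components D S by apply/mem_comps; exists (f a).
  have CsS := @comp_sub _ D S (f a).
  have -> : comp DI (f @^-1: S) a = f @^-1: comp D S (f a).
    apply/setP => b; rewrite !inE (conn_undI im); done.
  apply: F_mono (leq_bigmax_cond _ CS); apply: IH => // y yC.
  exact: im (subsetP CsS _ yC).
- have /eqP/cards1P [s sE] := s1.
  have sS : s \in sources D S by rewrite sE set11.
  have sSS : s \in S by move: sS; rewrite inE => /andP [].
  have [s0 s0E] := im _ sSS; subst s.
  exists 1 => //; apply: ED_one_source.
    apply/andP; split.
      apply/set0Pn; exists s0; by rewrite inE.
    apply/forall_inP => a; rewrite inE => aS; apply/forall_inP => b; rewrite inE => bS.
    rewrite (conn_undI im); exact: connectedP.
  have -> : sources DI (f @^-1: S) = [set s0].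
    apply/setP => t; rewrite (sourcesI im) sE !inE; exact: (inj_eq finj).
  exact: cards1.
- have sSS : s \in S by move: sS; rewrite inE => /andP [].
  have [s0 s0E] := im _ sSS; subst s.
  apply: (lemB (s := s0)); first by rewrite (sourcesI im).
  have -> : f @^-1: S :\: reach DI (f @^-1: S) s0 = f @^-1: (S :\: reach D S (f s0)).
    apply/setP => b; by rewrite !inE (conn_arcsI im).
  apply: IH => y; rewrite inE => /andP [_ yS]; exact: im.
Qed.

End Transfer.

Section Contract.
Variables (T : finType) (D D' : {set T * T}) (u v : T).
Implicit Types (S R : {set T}).
Definition pi (x : T) := if x == v then u else x.
Hypothesis uv : u != v.
Hypothesis uvD : (u, v) \in D.
Hypothesis acD : acyclic D.
Hypothesis acD' : acyclic D'.
Hypothesis H2 : forall a b, (a, b) \in D -> pi a != pi b -> (pi a, pi b) \in D'.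
Hypothesis H3 : forall a b, (a, b) \in D' ->
  exists a0 b0, [/\ (a0, b0) \in D, pi a0 = a & pi b0 = b].

Definition downset (S : {set T}) := forall a b, (a, b) \in D -> b \in S -> a \in S.
Definition gS (S : {set T}) : {set T} :=
  if v \in S then S :\ v else if u \in S then S :\: reach D S u else S.

Lemma pi_v : pi v = u. Proof. by rewrite /pi eqxx. Qed.
Lemma pi_nv x : x != v -> pi x = x. Proof. by rewrite /pi => /negbTE ->. Qed.
Lemma pi_ne_v x : pi x != v. Proof. by rewrite /pi; case: (eqVneq x v). Qed.

Lemma noloop (D0 : {set T * T}) x : acyclic D0 -> (x, x) \notin D0.
Proof. by move=> ac; apply/negP => /ac; rewrite connect0. Qed.

Lemma agreeDD' x y : x != u -> x != v -> y != u -> y != v ->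
  ((x, y) \in D) = ((x, y) \in D').
Proof.
move=> xu xv yu yv; apply/idP/idP => h.
  have := H2 h; rewrite !pi_nv //; apply.
  by apply/eqP => exy; subst y; move: (noloop x acD); rewrite h.
have [a0 [b0 [ab aE bE]]] := H3 h.
have a0v : a0 != v by apply/eqP => e; move: aE; rewrite e pi_v => e'; by rewrite e' eqxx in xu.
have b0v : b0 != v by apply/eqP => e; move: bE; rewrite e pi_v => e'; by rewrite e' eqxx in yu.
by move: aE bE ab; rewrite !pi_nv // => -> ->.
Qed.

Lemma lem_bc S k : elim_depth D S k -> v \notin S -> F D' (gS S) k.
Proof.
move=> H vS; rewrite /gS (negbTE vS).
case uS: (u \in S).
  have F1 : F D (S :\: reach D S u) k.
    apply: (lemA acD H); first exact: subsetDl.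
    move=> a b aS; rewrite !inE aS andbT => /negPn ca bS ab; rewrite bS andbT negbK.
    apply: connect_trans ca (connect1 _).
    by rewrite /arcs_in aS bS ab.
  apply: F_agree F1 _ => x y; rewrite !inE => /andP [xr xS] /andP [yr yS].
  apply: agreeDD'.
  - by apply/eqP => e; subst x; move: xr; rewrite uS connect0.
  - by apply/eqP => e; subst x; rewrite xS in vS.
  - by apply/eqP => e; subst y; move: yr; rewrite uS connect0.
  - by apply/eqP => e; subst y; rewrite yS in vS.
apply: F_agree (F_of H) _ => x y xS yS; apply: agreeDD'.
- by apply/eqP => e; subst x; rewrite xS in uS.
- by apply/eqP => e; subst x; rewrite xS in vS.
- by apply/eqP => e; subst y; rewrite yS in uS.
- by apply/eqP => e; subst y; rewrite yS in vS.
Qed.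

Lemma pi_S S z : u \in S -> z \in S -> pi z \in S :\ v.
Proof.
move=> uS zS; rewrite !inE pi_ne_v /=.
by rewrite /pi; case: (eqVneq z v).
Qed.

Lemma piMap S a b : u \in S -> connect (arcs_in D S) a b ->
  connect (arcs_in D' (S :\ v)) (pi a) (pi b).
Proof.
move=> uS; apply: connect_map => x y; rewrite /arcs_in => /and3P [xS yS xy].
case: (eqVneq (pi x) (pi y)) => [->|ne]; first exact: connect0.
apply: connect1; by rewrite /arcs_in !pi_S // H2.
Qed.

Lemma pre_in S z w : v \in S -> w \in S -> pi z = w -> z \in S.
Proof.
move=> vS wS; rewrite /pi; case: (eqVneq z v) => [->|_ ->] //.
Qed.

Lemma gR_sub S R : R \subset S -> gS R \subset S :\ v.
Proof.
move=> RS; apply/subsetP => y; rewrite /gS.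
case vR: (v \in R).
  by rewrite !inE => /andP [-> /(subsetP RS) ->].
have yR : y \in (if u \in R then R :\: reach D R u else R) -> y \in R.
  by case: (u \in R) => //; rewrite inE => /andP [].
move=> /yR yR'; rewrite !inE (subsetP RS _ yR') andbT.
by apply/eqP => e; subst y; rewrite yR' in vR.
Qed.

Lemma down_u S : downset S -> v \in S -> u \in S.
Proof. by move=> DS vS; exact: DS uvD vS. Qed.

Lemma lemM S k : elim_depth D S k -> downset S -> F D' (gS S) k.
Proof.
move=> H; move: (H); elim: H => {S k} [|S kf S0 nc HC IH|S cS s1|S s k cS s2 sS HR IH] H DS.
- by apply: lem_bc H _; rewrite inE.
- case vS: (v \in S); last by apply: lem_bc H _; rewrite vS.
  have uS := down_u DS vS.
  have -> : gS S = S :\ v by rewrite /gS vS.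
  apply: glue => C' /mem_comps [x xP ->].
  have xS : x \in S by move: (xP); rewrite inE => /andP [].
  set C := comp D S x.
  have CS : C \in components D S by apply/mem_comps; exists x.
  have CsS := @comp_sub _ D S x; have clC := @comp_closed _ D S x.
  have uvC : (u \in C) = (v \in C).
    apply/idP/idP => h.
      apply: (clC u v h vS); by rewrite /und_in uS vS uvD.
    apply: (clC v u h uS); by rewrite /und_in uS vS uvD orbT.
  have piC z : z \in S -> (pi z \in C) = (z \in C).
    by move=> zS; rewrite /pi; case: (eqVneq z v) => [->|].
  have DC : downset C.
    move=> a b ab bC; have bS := subsetP CsS _ bC; have aS := DS _ _ ab bS.
    apply: (clC b a bC aS); by rewrite /und_in aS bS ab orbT.
  have gC : gS C = C :\ v.
    rewrite /gS; case vC: (v \in C) => //; rewrite uvC vC.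
    by apply/setP => y; rewrite in_setD1; case: (eqVneq y v) => [->|] //=; rewrite vC.
  have [k1 le1 H1] := IH C CS (HC C CS) DC; rewrite gC in H1.
  have clP : closed_in D' (S :\ v) (C :\ v).
    move=> a b; rewrite !in_setD1 => /andP [av aC] /andP [bv bS] ab; rewrite bv /=.
    have key : forall p q, (p, q) \in D' -> p \in S -> q \in S ->
        (p \in C) = (q \in C).
      move=> p q pq pS qS; have [p0 [q0 [pq0 pE qE]]] := H3 pq.
      have p0S := pre_in vS pS pE; have q0S := pre_in vS qS qE.
      rewrite -pE -qE !piC //; apply/idP/idP => h.
        apply: (clC p0 q0 h q0S); by rewrite /und_in p0S q0S pq0.
      apply: (clC q0 p0 h p0S); by rewrite /und_in p0S q0S pq0 orbT.
    move: ab; rewrite /und_in !in_setD1 => /and3P [/andP [_ aS'] _ /orP [] e].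
      by rewrite -(key a b e aS' bS).
    by rewrite (key b a e bS aS').
  have xC : x \in C :\ v.
    rewrite in_setD1; apply/andP; split; last exact: comp_self.
    by case/setD1P: xP.
  rewrite (comp_restrict _ clP xC); last exact: setSD.
  apply: F_mono (leq_trans le1 (leq_bigmax_cond _ CS)).
  apply: split H1 _ _; apply/mem_comps; by exists x.
- case vS: (v \in S); last by apply: lem_bc H _; rewrite vS.
  have uS := down_u DS vS.
  have -> : gS S = S :\ v by rewrite /gS vS.
  have /eqP/cards1P [s sE] := s1.
  have sS : s \in sources D S by rewrite sE set11.
  have sSS : s \in S by move: sS; rewrite inE => /andP [].
  have sv : s != v.
    apply/eqP => e; subst s; move: sS; rewrite inE => /andP [_ /forall_inP h].
    by move: (h u uS); rewrite uvD.
  exists 1 => //; apply: (L_one acD' (s := s)); first by rewrite !inE sv.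
  move=> y; rewrite !inE => /andP [yv yS].
  rewrite -(pi_nv sv) -(pi_nv yv); apply: piMap uS _.
  exact: uniq_src acD s1 sS yS.
- case vS: (v \in S); last by apply: lem_bc H _; rewrite vS.
  have uS := down_u DS vS.
  have -> : gS S = S :\ v by rewrite /gS vS.
  have sSS : s \in S by move: sS; rewrite inE => /andP [].
  have sv : s != v.
    apply/eqP => e; subst s; move: sS; rewrite inE => /andP [_ /forall_inP h].
    by move: (h u uS); rewrite uvD.
  set R := S :\: reach D S s.
  have sP : s \in S :\ v by rewrite !inE sv.
  have [x xsrc cxs] := anc_source acD' sP.
  apply: (lemB xsrc).
  have DR : downset R.
    move=> a b ab; rewrite !inE => /andP [nb bS]; have aS := DS _ _ ab bS.
    rewrite aS andbT; apply/negP => ca; move/negP: nb; apply.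
    rewrite bS /=; apply: connect_trans ca (connect1 _); by rewrite /arcs_in aS bS ab.
  have [k1 le1 Hg] := IH HR DR.
  apply: F_mono le1; apply: (lemA acD' Hg).
    apply/subsetP => y; rewrite !inE => /andP [nxy /andP [yv yS]].
    have nsy : ~~ connect (arcs_in D' (S :\ v)) s y.
      apply/negP => c; move: nxy; rewrite yv yS /=.
      by rewrite (connect_trans cxs c).
    have yR : y \in R.
      rewrite !inE yS andbT; apply/negP => c.
      move/negP: nsy; apply; rewrite -(pi_nv sv) -(pi_nv yv); exact: piMap uS c.
    rewrite /gS -/R; case vR: (v \in R); first by rewrite in_setD1 yv yR.
    case uR: (u \in R) => //.
    rewrite in_setD yR andbT; apply/negP; rewrite inE => /andP [_ c].
    have RS : R \subset S by exact: subsetDl.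
    have c2 := connect_mono (arcs_mono (D:=D) RS) c.
    have vreach : connect (arcs_in D S) s v.
      by move: vR; rewrite !inE vS andbT => /negbFE.
    move/negP: nsy; apply; apply: connect_trans (_ : connect _ s u) _.
      by rewrite -(pi_nv sv) -pi_v; exact: piMap uS vreach.
    by rewrite -(pi_nv yv) -{1}(pi_nv uv); exact: piMap uS c2.
  move=> a b aG naT bG ab.
  have RS : R \subset S by exact: subsetDl.
  have aP := subsetP (gR_sub RS) _ aG; have bP := subsetP (gR_sub RS) _ bG.
  have xa : connect (arcs_in D' (S :\ v)) x a.
    by move: naT; rewrite in_setD aP andbT negbK inE => /andP [_ c].
  rewrite in_setD bP andbT negbK inE bP /=.
  apply: connect_trans xa (connect1 _); by rewrite /arcs_in aP bP ab.
Qed.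

End Contract.

Section Steps.
Variable T : finType.
Implicit Types (V S : {set T}) (D : {set T * T}) (e : rel T).

Definition orient V e D :=
  [/\ forall x y, (x, y) \in D -> (x \in V) && (y \in V),
      forall x y, x \in V -> y \in V -> e x y = ((x, y) \in D) || ((y, x) \in D)
    & acyclic D].

Lemma del_step V e w D2 : irreflexive e -> symmetric e -> w \in V ->
  orient (V :\ w) e D2 ->
  exists2 D1, orient V e D1 & forall k, elim_depth D1 V k -> F D2 (V :\ w) k.
Proof.
move=> irr sym wV [in2 or2 ac2].
pose D1 := [set p | (p \in D2) || [&& p.2 == w, p.1 \in V :\ w & e p.1 w]].
have D1E x y : ((x, y) \in D1) = ((x, y) \in D2) || [&& y == w, x \in V :\ w & e x w].
  by rewrite inE.
have D2w x : (x, w) \notin D2.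
  by apply/negP => /in2 /andP [_]; rewrite !inE eqxx.
have D2w' y : (w, y) \notin D2.
  by apply/negP => /in2 /andP [+ _]; rewrite !inE eqxx.
have noout b : (w, b) \notin D1.
  rewrite D1E (negbTE (D2w' b)) /=; by rewrite !inE eqxx /= andbF.
have ac1 : acyclic D1.
  move=> a b ab; apply/negP => c.
  case: (eqVneq b w) => [bw|bw].
    subst b; case: (eqVneq a w) => [aw|aw]; first by subst a; rewrite (negbTE (noout w)) in ab.
    have wa : w != a by rewrite eq_sym.
    have [z wz _] := connect_first c wa.
    by move: wz; rewrite /arcs_in (negbTE (noout z)) !andbF.
  have ab2 : (a, b) \in D2 by move: ab; rewrite D1E (negbTE bw) /= orbF.
  have H : forall y x, x != w -> arcs_in D1 setT y x -> y != w /\ arcs_in D2 setT y x.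
    move=> y x xw; rewrite /arcs_in !in_setT /= D1E (negbTE xw) /= orbF => yx.
    split => //; apply/eqP => yw; subst y; by rewrite (negbTE (D2w' x)) in yx.
  have aw : a != w by apply/eqP => aw; subst a; rewrite (negbTE (D2w' b)) in ab2.
  have [_ c2] := connect_bwd (W := fun z => z != w) H aw c.
  by move: (ac2 _ _ ab2); rewrite c2.
exists D1.
  split => //.
    move=> x y; rewrite D1E => /orP [/in2 /andP []|/and3P [/eqP -> xV _]].
      by rewrite !inE => /andP [_ ->] /andP [_ ->].
    by move: xV; rewrite !inE => /andP [_ ->].
  move=> x y xV yV; rewrite !D1E.
  case: (eqVneq x w) => [xw|xw]; case: (eqVneq y w) => [yw|yw].
  - subst x y; by rewrite irr (negbTE (D2w w)) !inE eqxx.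
  - subst x; rewrite (negbTE (D2w' y)) (negbTE (D2w y)) /= !inE (negbTE yw) yV /=.
    by rewrite sym.
  - subst y; rewrite (negbTE (D2w' x)) (negbTE (D2w x)) /= !inE (negbTE xw) xV /=.
    by rewrite orbF.
  - rewrite /= !orbF; apply: or2; by rewrite !inE ?xw ?yw ?xV ?yV.
move=> k H.
have F1 : F D1 (V :\ w) k.
  apply: (lemA ac1 H); first exact: subsetDl.
  move=> a b aV; rewrite in_setD1 aV andbT negbK => /eqP -> bV ab.
  by rewrite (negbTE (noout b)) in ab.
apply: F_agree F1 _ => x y _; rewrite in_setD1 => /andP [yw _].
by rewrite D1E (negbTE yw) /= orbF.
Qed.

End Steps.

Section Steps2.
Variable T : finType.
Implicit Types (V S : {set T}) (D : {set T * T}) (e : rel T).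

Lemma con_step V e u v D2 : irreflexive e -> symmetric e -> u \in V -> v \in V ->
  u != v -> e u v -> orient (V :\ v) (contract e u v) D2 ->
  exists2 D1, orient V e D1 & forall k, elim_depth D1 V k -> F D2 (V :\ v) k.
Proof.
move=> irr sym uV vV uv euv [in2 or2 ac2].
pose p := pi u v.
have pv : p v = u by rewrite /p /pi eqxx.
have pnv x : x != v -> p x = x by rewrite /p /pi => /negbTE ->.
have pu : p u = u by exact: pnv.
have pV x : x \in V -> p x \in V :\ v.
  move=> xV; rewrite !inE; case: (eqVneq x v) => [->|xv]; first by rewrite pv uv.
  by rewrite pnv // xv.
pose D1 := [set q | [&& q.1 \in V, q.2 \in V, e q.1 q.2 &
   (if (q.1 == u) && (q.2 == v) then true else if (q.1 == v) && (q.2 == u) then false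
    else (p q.1, p q.2) \in D2)]].
have D1E x y : ((x, y) \in D1) = [&& x \in V, y \in V, e x y &
   (if (x == u) && (y == v) then true else if (x == v) && (y == u) then false
    else (p x, p y) \in D2)].
  by rewrite inE.
have key x y : e x y -> ~~ ((x == u) && (y == v)) -> ~~ ((x == v) && (y == u)) ->
    (p x != p y) && contract e u v (p x) (p y).
  move=> exy E1 E2.
  have xy : x != y by apply/eqP => exy'; subst y; by rewrite irr in exy.
  case: (eqVneq x v) => [xv|xv].
    subst x; have yu : y != u by move: E2; rewrite eqxx.
    have yv : y != v by rewrite eq_sym.
    rewrite pv (pnv _ yv) eq_sym yu /contract /= eq_sym yu eqxx exy.
    by rewrite orbT.
  case: (eqVneq y v) => [yv|yv].
    subst y; have xu : x != u by move: E1; rewrite eqxx andbT.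
    rewrite pv (pnv _ xv) xu /contract /= xu eqxx /=.
    by rewrite exy !orbT.
  by rewrite (pnv _ xv) (pnv _ yv) xy /contract /= xy exy.
have H2' a b : (a, b) \in D1 -> p a != p b -> (p a, p b) \in D2.
  rewrite D1E => /and4P [_ _ _].
  case E1: ((a == u) && (b == v)).
    by case/andP: E1 => /eqP -> /eqP ->; rewrite pu pv eqxx.
  by case E2: ((a == v) && (b == u)).
have pmap a b : connect (arcs_in D1 setT) a b -> connect (arcs_in D2 setT) (p a) (p b).
  apply: connect_map => x y; rewrite /arcs_in !in_setT /= => xy.
  case: (eqVneq (p x) (p y)) => [->|ne]; first exact: connect0.
  by apply: connect1; rewrite /arcs_in !in_setT /= H2'.
have ac1 : acyclic D1.
  move=> a b ab; apply/negP => c.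
  case: (eqVneq (p a) (p b)) => [pe|pne]; last first.
    by move: (ac2 _ _ (H2' _ _ ab pne)); rewrite pmap.
  have /andP [/eqP au /eqP bv] : (a == u) && (b == v).
    move: (ab); rewrite D1E => /and4P [_ _ eab].
    case E1: ((a == u) && (b == v)) => //.
    case E2: ((a == v) && (b == u)) => // _.
    by move: (key a b eab (negbT E1) (negbT E2)); rewrite pe eqxx.
  subst a b; have vu : v != u by rewrite eq_sym.
  have [z vz cz] := connect_first c vu.
  move: vz; rewrite /arcs_in !in_setT /= => vz.
  have zu : z != u.
    by apply/eqP => zu; subst z; move: vz; rewrite D1E eqxx (negbTE vu) /= eqxx !andbF.
  have zv : z != v.
    by apply/eqP => zv; subst z; move: vz; rewrite D1E irr !andbF.
  have uz : (u, z) \in D2.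
    have := H2' v z vz; rewrite pv (pnv _ zv); apply; by rewrite eq_sym.
  by move: (ac2 _ _ uz); have := pmap _ _ cz; rewrite pu (pnv _ zv) => ->.
have H3 a b : (a, b) \in D2 -> exists a0 b0, [/\ (a0, b0) \in D1, p a0 = a & p b0 = b].
  move=> ab; have /andP [aP bP] := in2 _ _ ab.
  move: (aP) (bP); rewrite !inE => /andP [av aV] /andP [bv bV].
  have := or2 _ _ aP bP; rewrite ab /contract => /andP [nab /or3P [eab|/andP [/eqP au evb]|/andP [/eqP bu eav]]].
  - exists a, b; split; rewrite ?pnv //.
    by rewrite D1E aV bV eab (negbTE bv) andbF (negbTE av) /= (pnv _ av) (pnv _ bv).
  - subst a; exists v, b; split; rewrite ?pv ?pnv //.
    by rewrite D1E vV bV evb (eq_sym v u) (negbTE uv) /= eqxx (eq_sym b u) (negbTE nab) /= pv (pnv _ bv).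
  - subst b; exists a, v; split; rewrite ?pv ?pnv //.
    by rewrite D1E aV vV eav (negbTE nab) (negbTE av) /= (pnv _ av) pv.
exists D1.
  split => //.
    by move=> x y; rewrite D1E => /and4P [-> -> _ _].
  move=> x y xV yV; rewrite !D1E xV yV /= (sym y x).
  case exy: (e x y) => //=.
  have E1' : ((y == v) && (x == u)) = ((x == u) && (y == v)) by rewrite andbC.
  have E2' : ((y == u) && (x == v)) = ((x == v) && (y == u)) by rewrite andbC.
  rewrite E1' E2'.
  case E1: ((x == u) && (y == v)) => //.
  case E2: ((x == v) && (y == u)) => //.
  have /andP [_ cxy] := key x y exy (negbT E1) (negbT E2).
  by rewrite -or2 ?pV.
move=> k H.
have := lemM uv _ ac1 ac2 H2' H3 H.
rewrite /gS vV; apply.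
  by rewrite D1E uV vV euv !eqxx.
by move=> a b; rewrite D1E => /and4P [-> _ _ _].
Qed.

End Steps2.

Lemma contract_sym (T : finType) (e : rel T) u v : symmetric e -> symmetric (contract e u v).
Proof.
move=> sym x y; rewrite /contract eq_sym (sym x y) (sym v y) (sym x v).
by case: (e y x); case: (x == u); case: (y == u); case: (e y v); case: (e v x).
Qed.

Lemma contract_irr (T : finType) (e : rel T) u v : irreflexive (contract e u v).
Proof. by move=> x; rewrite /contract eqxx. Qed.

Lemma chain (T : finType) (eH : rel T) V e : im_reach [set: T] eH V e ->
  symmetric eH -> irreflexive eH ->
  [/\ symmetric e, irreflexive e &
    forall D, orient V e D -> exists2 DH, orient [set: T] eH DH &
      forall k, elim_depth DH [set: T] k -> F D V k].
Proof.
move=> Hr symH irrH; elim: Hr => [|V0 e0 w _ [sym irr IH] wV|V0 e0 u v _ [sym irr IH] uV vV uv euv].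
- split => // D oD; exists D => // k H; exact: F_of.
- split => // D2 oD2.
  have [D1 oD1 H1] := del_step irr sym wV oD2.
  have [DH oDH HH] := IH D1 oD1.
  exists DH => // k H; have [k1 le1 Hk1] := HH k H.
  exact: F_mono (H1 _ Hk1) le1.
- split; [exact: contract_sym | exact: contract_irr |] => D2 oD2.
  have [D1 oD1 H1] := con_step irr sym uV vV uv euv oD2.
  have [DH oDH HH] := IH D1 oD1.
  exists DH => // k H; have [k1 le1 Hk1] := HH k H.
  exact: F_mono (H1 _ Hk1) le1.
Qed.

Lemma bigmin_ge (I : finType) (P : pred I) (Fn : I -> nat) d x :
  x <= d -> (forall i, P i -> x <= Fn i) -> x <= \big[minn/d]_(i | P i) Fn i.
Proof.
move=> xd H; apply: (big_ind (fun m => x <= m)) => //.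
  by move=> a b xa xb; rewrite leq_min xa xb.
Qed.

Lemma bigmin_le_d (I : finType) (P : pred I) (Fn : I -> nat) d :
  \big[minn/d]_(i | P i) Fn i <= d.
Proof.
apply: (big_rec (fun m => m <= d)) => // i m _ md.
exact: leq_trans (geq_minr _ _) md.
Qed.

Lemma bigmin_le_i (I : finType) (P : pred I) (Fn : I -> nat) d i0 :
  P i0 -> \big[minn/d]_(i | P i) Fn i <= Fn i0.
Proof.
move=> Pi0; rewrite unlock.
have : i0 \in index_enum I by rewrite mem_index_enum.
elim: (index_enum I) => //= j r IH; rewrite inE => /orP [/eqP <-|ir].
  by rewrite Pi0 geq_minl.
case: (P j); last exact: IH.
exact: leq_trans (geq_minr _ _) (IH ir).
Qed.

Theorem mainTheorem7 (T : finType) (eH : rel T) (T' : finType) (eI : rel T') :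
  symmetric eH -> irreflexive eH ->
  symmetric eI -> irreflexive eI ->
  induced_minor eI eH ->
  dtd eI <= dtd eH.
Proof.
move=> symH irrH symI irrI [V [e [Hr [f [finj fim fe]]]]].
have [_ _ CH] := chain Hr symH irrH.
have imV y : y \in V -> exists a, y = f a.
  by rewrite -fim => /imsetP [a _ ->]; exists a.
have fV a : f a \in V by rewrite -fim imset_f.
rewrite /dtd; apply/bigmax_leqP => Dt /andP [/forallP or1 /forallP or2].
pose h (q : T' * T') := (f q.1, f q.2).
have hinj : injective h.
  by move=> [a b] [c d]; rewrite /h /= => [[/finj -> /finj ->]].
pose DV := h @: Dt.
have DVE a b : ((f a, f b) \in DV) = ((a, b) \in Dt).
  by rewrite -(mem_imset _ _ hinj).
have DVin x y : (x, y) \in DV -> exists a b, [/\ x = f a, y = f b & (a, b) \in Dt].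
  by case/imsetP => [[a b] ab [-> ->]]; exists a, b.
have oDV : orient V e DV.
  split.
  - by move=> x y /DVin [a [b [-> -> _]]]; rewrite !fV.
  - move=> x y /imV [a ->] /imV [b ->]; rewrite !DVE -fe.
    by have /forallP := or1 a; move=> /(_ b) /eqP.
  - move=> x y /DVin [a [b [-> -> ab]]]; apply/negP => c.
    have L : forall c0 y0, arcs_in DV setT (f c0) y0 ->
        exists2 d, y0 = f d & arcs_in Dt setT c0 d.
      move=> c0 y0; rewrite /arcs_in !in_setT /= => /DVin [a0 [b0 [/finj <- -> ab0]]].
      by exists b0; rewrite ?in_setT.
    have [a' /finj <- c'] := connect_lift L c.
    by have /forallP := or2 a; move=> /(_ b) /implyP /(_ ab); rewrite c'.
have [DH oDH HH] := CH DV oDV.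
have acH : acyclic_orientation eH DH.
  case: oDH => _ o2 ac; apply/andP; split.
    apply/forallP => x; apply/forallP => y; by rewrite o2 ?in_setT.
  apply/forallP => x; apply/forallP => y; apply/implyP; exact: ac.
apply: leq_trans (leq_bigmax_cond _ acH).
rewrite /dtd_dag; apply: bigmin_ge.
  exact: leq_trans (bigmin_le_d _ _ _) (leq_card f finj).
move=> k /pboolP Hk; have [k1 le1 H1] := HH k Hk.
have [k2 le2 H2] := transfer finj H1 imV.
have DIE : DI f DV = Dt.
  apply/setP => [[a b]]; by rewrite inE /= DVE.
have VE : f @^-1: V = [set: T'] by apply/setP => a; rewrite !inE fV.
rewrite DIE VE in H2.
apply: leq_trans (leq_trans le2 le1).
case: (ltnP k2 #|T'|.+1) => [lt|ge].
  have := @bigmin_le_i _ (fun i : 'I_#|T'|.+1 => pbool (elim_depth Dt [set: T'] i))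
    (fun i : 'I_#|T'|.+1 => nat_of_ord i) #|T'| (Ordinal lt).
  by apply; apply/pboolP.
exact: leq_trans (bigmin_le_d _ _ _) (ltnW ge).
Qed.
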